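(* Assume the labeled data contain at least one point with $y_i=1$ and at least one with $y_i=-1$, $\tau\in\{0,\dots,m\}$, and let $M_0$ be the valid big-$M$ $M_0:=2\sqrt{2(2C_1\bar n+C_2(m-\tau))}\max_{i}\|x^i\|+1$ with $\bar n:=|\{i\in[1,n]:y_i=-1\}|$. Let $(\bar\omega,\bar b,\bar\xi,\bar\eta,\bar z)$ be a feasible point of (P3) (with constant $M_0$) with objective value $\bar f$, and let $(\omega^*,b^*,\xi^*,\eta^*,z^* )$ be an optimal solution of (P3) (with constant $M_0$) with optimal value $f^*$. Let $P_u:=\{i\in[n+1,N]:(\omega^* )^\top x^i+b^*>0\}$, $N_u:=\{i\in[n+1,N]:(\omega^* )^\top x^i+b^*<0\}$, let $S_p\subseteq P_u$, $S_n\subseteq N_u$ be arbitrary, and let $s\in[n+1,N]\setminus(S_p\cup S_n)$ with $\bar\omega^\top x^s+\bar b<0$. Consider Problem (P5) with constant $M:=2\sqrt{2\bar f}\max_{i\in[1,N]}\|x^i\|+1$. Then: (a) the objective value $\tilde f$ of any feasible point of (P5) satisfies $f^*\le\tilde f$; (b) if $\tilde f$ is the optimal value of (P5) and $\bar f<\tilde f$, then $(\omega^* )^\top x^s+b^*<0$, i.e., $s\in N_u$.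
   Context: Data: points $x^1,\dots,x^N\in\mathbb{R}^d$; the first $n$ are labeled with $y_i\in\{-1,1\}$, the remaining $m:=N-n$ points are unlabeled; $[a,b]=\{a,\dots,b\}$; Euclidean norm. Parameters $C_1,C_2>0$, integer $\tau$. Objective $F(\omega,\xi,\eta):=\tfrac12\|\omega\|^2+C_1\sum_{i=1}^n\xi_i+C_2(\eta_1+\eta_2)$. Problem (P3) with constant $M$: minimize $F$ over $\omega\in\mathbb{R}^d,b\in\mathbb{R},\xi\in\mathbb{R}^n,\eta\in\mathbb{R}^2$, $z_i\in\{0,1\}$ ($i\in[n+1,N]$) subject to $y_i(\omega^\top x^i+b)\ge1-\xi_i$ ($i\in[1,n]$); $-(1-z_i)M\le\omega^\top x^i+b\le z_iM$ ($i\in[n+1,N]$); $\tau-\eta_1\le\sum_{i=n+1}^Nz_i\le\tau+\eta_2$; $\xi\ge0$; $\eta\ge0$. Problem (P5) (for given $S_p,S_n,s$ and constant $M$): minimize $F$ over $\omega,b,\xi,\eta$ and $z_i\in\{0,1\}$ for $i\in[n+1,N]\setminus(S_p\cup S_n)$, subject to $y_i(\omega^\top x^i+b)\ge1-\xi_i$ ($i\in[1,n]$); $-(1-z_i)M\le\omega^\top x^i+b\le z_iM$ for $i\in[n+1,N]\setminus(\{s\}\cup S_p\cup S_n)$; $\omega^\top x^i+b\ge0$ for $i\in S_p$; $\omega^\top x^i+b\le0$ for $i\in S_n$; $0\le\omega^\top x^s+b\le z_sM$; $\tau-\eta_1\le|S_p|+\sum_{i\in[n+1,N]\setminus(S_p\cup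 S_n)}z_i\le\tau+\eta_2$; $\xi_i\ge0$ ($i\in[1,n]$); $\eta_1,\eta_2\ge0$. *)

(* Defs.v *)
From mathcomp Require Import all_boot all_order all_algebra.
Set Implicit Arguments. Unset Strict Implicit. Unset Printing Implicit Defensive.
Import Order.TTheory GRing.Theory Num.Theory.
Local Open Scope ring_scope.

(* Points of R^d are functions 'I_d -> R.
   Labeled points x^1..x^n are xl : 'I_n -> ('I_d -> R) with labels yl,
   unlabeled points x^{n+1}..x^N are xu : 'I_m -> ('I_d -> R) (N = n + m). *)

Definition dot (R : rcfType) (d : nat) (u v : 'I_d -> R) : R :=
  \sum_(k < d) u k * v k.

Definition enorm (R : rcfType) (d : nat) (u : 'I_d -> R) : R :=
  Num.sqrt (dot u u).

(* max_{i in [1,N]} ||x^i||  (norms are >= 0, so 0 is a neutral start) *)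
Definition maxnorm (R : rcfType) (d n m : nat)
  (xl : 'I_n -> 'I_d -> R) (xu : 'I_m -> 'I_d -> R) : R :=
  Num.max (\big[Num.max/0]_(i < n) enorm (xl i))
          (\big[Num.max/0]_(j < m) enorm (xu j)).

Definition b2R (R : rcfType) (b : bool) : R := (b : nat)%:R.

Definition objF (R : rcfType) (d n : nat) (C1 C2 : R)
  (w : 'I_d -> R) (xi : 'I_n -> R) (eta1 eta2 : R) : R :=
  1 / 2 * enorm w ^+ 2 + C1 * \sum_(i < n) xi i + C2 * (eta1 + eta2).

Definition P3_feasible (R : rcfType) (d n m : nat)
  (xl : 'I_n -> 'I_d -> R) (yl : 'I_n -> R) (xu : 'I_m -> 'I_d -> R)
  (tau : nat) (M : R)
  (w : 'I_d -> R) (b : R) (xi : 'I_n -> R) (eta1 eta2 : R) (z : 'I_m -> bool)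
  : Prop :=
  [/\ (forall i, 1 - xi i <= yl i * (dot w (xl i) + b)),
      (forall j, - (1 - b2R R (z j)) * M <= dot w (xu j) + b
                 /\ dot w (xu j) + b <= b2R R (z j) * M),
      (tau%:R - eta1 <= \sum_(j < m) b2R R (z j)
        /\ \sum_(j < m) b2R R (z j) <= tau%:R + eta2),
      (forall i, 0 <= xi i) &
      (0 <= eta1 /\ 0 <= eta2)].

Definition P3_optimal (R : rcfType) (d n m : nat) (C1 C2 : R)
  (xl : 'I_n -> 'I_d -> R) (yl : 'I_n -> R) (xu : 'I_m -> 'I_d -> R)
  (tau : nat) (M : R)
  (w : 'I_d -> R) (b : R) (xi : 'I_n -> R) (eta1 eta2 : R) (z : 'I_m -> bool)
  : Prop :=
  P3_feasible xl yl xu tau M w b xi eta1 eta2 z /\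
  forall w' b' xi' eta1' eta2' z',
    P3_feasible xl yl xu tau M w' b' xi' eta1' eta2' z' ->
    objF C1 C2 w xi eta1 eta2 <= objF C1 C2 w' xi' eta1' eta2'.

(* The variables
   z_j are only meaningful for j outside Sp :|: Sn; the values of z on
   Sp :|: Sn never enter any constraint nor the objective. *)
Definition P5_feasible (R : rcfType) (d n m : nat)
  (xl : 'I_n -> 'I_d -> R) (yl : 'I_n -> R) (xu : 'I_m -> 'I_d -> R)
  (tau : nat) (Sp Sn : {set 'I_m}) (s : 'I_m) (M : R)
  (w : 'I_d -> R) (b : R) (xi : 'I_n -> R) (eta1 eta2 : R) (z : 'I_m -> bool)
  : Prop :=
  [/\ (forall i, 1 - xi i <= yl i * (dot w (xl i) + b)),
      (forall j, j \notin s |: (Sp :|: Sn) ->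
          - (1 - b2R R (z j)) * M <= dot w (xu j) + b
          /\ dot w (xu j) + b <= b2R R (z j) * M),
      ((forall j, j \in Sp -> 0 <= dot w (xu j) + b)
        /\ (forall j, j \in Sn -> dot w (xu j) + b <= 0)
        /\ (0 <= dot w (xu s) + b /\ dot w (xu s) + b <= b2R R (z s) * M)),
      (tau%:R - eta1 <= #|Sp|%:R + \sum_(j < m | j \notin Sp :|: Sn) b2R R (z j)
        /\ #|Sp|%:R + \sum_(j < m | j \notin Sp :|: Sn) b2R R (z j) <= tau%:R + eta2) &
      [/\ (forall i, 0 <= xi i), 0 <= eta1 & 0 <= eta2]].

Definition P5_optimal (R : rcfType) (d n m : nat) (C1 C2 : R)
  (xl : 'I_n -> 'I_d -> R) (yl : 'I_n -> R) (xu : 'I_m -> 'I_d -> R)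
  (tau : nat) (Sp Sn : {set 'I_m}) (s : 'I_m) (M : R)
  (w : 'I_d -> R) (b : R) (xi : 'I_n -> R) (eta1 eta2 : R) (z : 'I_m -> bool)
  : Prop :=
  P5_feasible xl yl xu tau Sp Sn s M w b xi eta1 eta2 z /\
  forall w' b' xi' eta1' eta2' z',
    P5_feasible xl yl xu tau Sp Sn s M w' b' xi' eta1' eta2' z' ->
    objF C1 C2 w xi eta1 eta2 <= objF C1 C2 w' xi' eta1' eta2'.

Definition bigM0 (R : rcfType) (d n m : nat) (C1 C2 : R)
  (xl : 'I_n -> 'I_d -> R) (yl : 'I_n -> R) (xu : 'I_m -> 'I_d -> R)
  (tau : nat) : R :=
  let nbar := #|[set i : 'I_n | yl i == -1]| in
  2 * Num.sqrt (2 * (2 * C1 * nbar%:R + C2 * (m - tau)%:R))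
    * maxnorm xl xu + 1.

(* Main.v *)
Require Import Defs.
From mathcomp Require Import all_boot all_order all_algebra.
From mathcomp Require Import ring lra.
Set Implicit Arguments. Unset Strict Implicit.
Import Order.TTheory GRing.Theory Num.Theory.
Local Open Scope ring_scope.


Lemma dot_ge0 {R : rcfType} d (u : 'I_d -> R) : 0 <= dot u u.
Proof. by apply: sumr_ge0 => k _; rewrite -expr2 sqr_ge0. Qed.

Lemma enorm_ge0 {R : rcfType} d (u : 'I_d -> R) : 0 <= enorm u.
Proof. exact: sqrtr_ge0. Qed.

Lemma enorm_sq {R : rcfType} d (u : 'I_d -> R) : enorm u ^+ 2 = dot u u.
Proof. by rewrite /enorm sqr_sqrtr // dot_ge0. Qed.

Lemma cs_e {R : rcfType} d (u v : 'I_d -> R) (e : R) : e ^+ 2 = 1 ->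
  e * dot u v <= enorm u * enorm v.
Proof.
move=> he; set a := enorm u; set c := enorm v.
have ha : 0 <= a := enorm_ge0 u. have hc : 0 <= c := enorm_ge0 v.
have Ea : a ^+ 2 = dot u u := enorm_sq u. have Ec : c ^+ 2 = dot v v := enorm_sq v.
have E : \sum_(k < d) (c * u k - e * a * v k) ^+ 2 =
   c ^+ 2 * dot u u - (2 * e * a * c) * dot u v + e ^+ 2 * a ^+ 2 * dot v v.
  rewrite /dot !mulr_sumr -sumrN -!big_split /=; apply: eq_bigr => k _; ring.
have H0 : 0 <= \sum_(k < d) (c * u k - e * a * v k) ^+ 2.
  by apply: sumr_ge0 => k _; rewrite sqr_ge0.
rewrite E he -Ea -Ec in H0.
have [ac0|acpos] := eqVneq (a * c) 0.
  move: ac0 => /eqP; rewrite mulf_eq0 => /orP [] /eqP z0.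
  - have : dot u u = 0 by rewrite -Ea z0 expr0n.
    move/psumr_eq0P => h.
    have -> : dot u v = 0.
      rewrite /dot big1 // => k _.
      have /eqP := h (fun k _ => ltac:(rewrite -expr2; exact: sqr_ge0)) k isT.
      by rewrite mulf_eq0 orbb => /eqP ->; rewrite mul0r.
    by rewrite mulr0 mulr_ge0.
  - have : dot v v = 0 by rewrite -Ec z0 expr0n.
    move/psumr_eq0P => h.
    have -> : dot u v = 0.
      rewrite /dot big1 // => k _.
      have /eqP := h (fun k _ => ltac:(rewrite -expr2; exact: sqr_ge0)) k isT.
      by rewrite mulf_eq0 orbb => /eqP ->; rewrite mulr0.
    by rewrite mulr0 mulr_ge0.
have acp : 0 < a * c by rewrite lt_def acpos mulr_ge0.
have : 0 <= (a * c) * (2 * (a * c - e * dot u v)).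
  by move: H0; congr (_ <= _); ring.
rewrite pmulr_rge0 // pmulr_rge0 //; lra.
Qed.

Lemma cs_abs {R : rcfType} d (u v : 'I_d -> R) : `|dot u v| <= enorm u * enorm v.
Proof.
have h1 := @cs_e R d u v 1 (expr1n _ _).
have h2 := @cs_e R d u v (-1) ltac:(by rewrite sqrrN expr1n).
rewrite ler_norml; lra.
Qed.


Lemma neq1m1 {R : rcfType} : ((1:R) == -1) = false.
Proof. by apply/negbTE/eqP; lra. Qed.
Lemma neqm11 {R : rcfType} : ((-1:R) == 1) = false.
Proof. by apply/negbTE/eqP; lra. Qed.

Lemma maxnorm_ge0 {R : rcfType} d n m (xl : 'I_n -> 'I_d -> R) (xu : 'I_m -> 'I_d -> R) : 0 <= maxnorm xl xu.
Proof.
rewrite /maxnorm le_max; apply/orP; left.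
by apply: (big_ind (fun x => 0 <= x)) => // [x y hx hy|i _]; [rewrite le_max hx | exact: enorm_ge0].
Qed.

Lemma maxnorm_l {R : rcfType} d n m (xl : 'I_n -> 'I_d -> R) (xu : 'I_m -> 'I_d -> R) i : enorm (xl i) <= maxnorm xl xu.
Proof.
rewrite /maxnorm le_max; apply/orP; left.
exact: le_bigmax.
Qed.

Lemma maxnorm_u {R : rcfType} d n m (xl : 'I_n -> 'I_d -> R) (xu : 'I_m -> 'I_d -> R) j :
  enorm (xu j) <= maxnorm xl xu.
Proof.
rewrite /maxnorm le_max; apply/orP; right.
exact: le_bigmax.
Qed.

Lemma dot_bound {R : rcfType} d (w x : 'I_d -> R) Mx : enorm x <= Mx ->
  `|dot w x| <= enorm w * Mx.
Proof.
move=> h; apply: le_trans (cs_abs w x) _.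
by apply: ler_wpM2l => //; exact: enorm_ge0.
Qed.

Lemma clamp {R : rcfType} d n m (xl : 'I_n -> 'I_d -> R) (yl : 'I_n -> R) (xu : 'I_m -> 'I_d -> R) Mx
  (hy : forall i, yl i = 1 \/ yl i = -1)
  (hpos : exists i, yl i = 1) (hneg : exists i, yl i = -1)
  (hl : forall i, enorm (xl i) <= Mx) (hu : forall j, enorm (xu j) <= Mx)
  (w : 'I_d -> R) b xi :
  (forall i, 1 - xi i <= yl i * (dot w (xl i) + b)) -> (forall i, 0 <= xi i) ->
  exists b' xi', [/\ (forall i, 1 - xi' i <= yl i * (dot w (xl i) + b')),
     (forall i, 0 <= xi' i),
     `|b'| <= enorm w * Mx + 1,
     (forall j, (0 <= dot w (xu j) + b -> 0 <= dot w (xu j) + b') /\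
                (dot w (xu j) + b <= 0 -> dot w (xu j) + b' <= 0)) &
     (b' = b /\ xi' = xi) \/ \sum_i xi' i < \sum_i xi i].
Proof.
move=> hc hxi.
have Wl : forall i, `|dot w (xl i)| <= enorm w * Mx by move=> i; apply: dot_bound.
have Wu : forall j, `|dot w (xu j)| <= enorm w * Mx by move=> j; apply: dot_bound.
have W0 : 0 <= enorm w * Mx.
  case: hpos => i0 _; exact: le_trans (normr_ge0 _) (Wl i0).
set W := enorm w * Mx in Wl Wu W0 *.
have [hbK|hbK] := ltrP (W + 1) b.
  exists (W + 1), (fun i => xi i - (if yl i == -1 then b - (W + 1) else 0)).
  split.
  - move=> i; have := hc i; have := hxi i; have := Wl i; rewrite ler_norml => /andP [h1 h2].
    case: (hy i) => ->; rewrite ?neq1m1 ?eqxx => *; lra.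
  - move=> i; have := hc i; have := hxi i; have := Wl i; rewrite ler_norml => /andP [h1 h2].
    case: (hy i) => ->; rewrite ?neq1m1 ?eqxx => *; lra.
  - rewrite ger0_norm; lra.
  - move=> j; have := Wu j; rewrite ler_norml => /andP [h1 h2]; split; lra.
  - right; rewrite sumrB; case: hneg => i0 hi0.
    have : b - (W + 1) <= \sum_(i < n) (if yl i == -1 then b - (W + 1) else 0).
      rewrite (bigD1 i0) //= hi0 eqxx.
      have : 0 <= \sum_(i < n | i != i0) (if yl i == -1 then b - (W + 1) else 0).
        by apply: sumr_ge0 => i _; case: ifP => _; lra.
      lra.
    lra.
have [hbK2|hbK2] := ltrP b (- (W + 1)).
  exists (- (W + 1)), (fun i => xi i - (if yl i == 1 then - (W + 1) - b else 0)).
  split.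
  - move=> i; have := hc i; have := hxi i; have := Wl i; rewrite ler_norml => /andP [h1 h2].
    case: (hy i) => ->; rewrite ?neqm11 ?eqxx => *; lra.
  - move=> i; have := hc i; have := hxi i; have := Wl i; rewrite ler_norml => /andP [h1 h2].
    case: (hy i) => ->; rewrite ?neqm11 ?eqxx => *; lra.
  - rewrite normrN ger0_norm; lra.
  - move=> j; have := Wu j; rewrite ler_norml => /andP [h1 h2]; split; lra.
  - right; rewrite sumrB; case: hpos => i0 hi0.
    have : - (W + 1) - b <= \sum_(i < n) (if yl i == 1 then - (W + 1) - b else 0).
      rewrite (bigD1 i0) //= hi0 eqxx.
      have : 0 <= \sum_(i < n | i != i0) (if yl i == 1 then - (W + 1) - b else 0).
        by apply: sumr_ge0 => i _; case: ifP => _; lra.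
      lra.
    lra.
exists b, xi; split => //; last by left; split.
by rewrite ler_norml; apply/andP; split.
Qed.

Lemma b2R1 {R : rcfType} : b2R R true = 1. Proof. by []. Qed.
Lemma b2R0 {R : rcfType} : b2R R false = 0. Proof. by []. Qed.

Lemma sign_of {R : rcfType} (z : bool) (v M : R) :
  - (1 - b2R R z) * M <= v -> v <= b2R R z * M ->
  (z -> 0 <= v) /\ (~~ z -> v <= 0).
Proof. by case: z; rewrite ?b2R1 ?b2R0 /= => h1 h2; split => // _; lra. Qed.

Lemma cons_of {R : rcfType} (z : bool) (v M : R) :
  (z -> 0 <= v) -> (~~ z -> v <= 0) -> `|v| <= M ->
  - (1 - b2R R z) * M <= v /\ v <= b2R R z * M.
Proof.
rewrite ler_norml => h1 h2 /andP [h3 h4].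
case: z h1 h2; rewrite ?b2R1 ?b2R0 /= => h1 h2.
- have := h1 isT; split; lra.
- have := h2 isT; split; lra.
Qed.

Lemma objF_norm {R : rcfType} d n (C1 C2 : R) (w : 'I_d -> R) (xi : 'I_n -> R) e1 e2 :
  0 < C1 -> 0 < C2 -> (forall i, 0 <= xi i) -> 0 <= e1 -> 0 <= e2 ->
  enorm w ^+ 2 <= 2 * objF C1 C2 w xi e1 e2.
Proof.
move=> h1 h2 hx he1 he2; rewrite /objF.
have : 0 <= C1 * \sum_i xi i by apply: mulr_ge0; [lra | apply: sumr_ge0].
have : 0 <= C2 * (e1 + e2) by apply: mulr_ge0; lra.
lra.
Qed.

Lemma enorm_le {R : rcfType} d (w : 'I_d -> R) F : enorm w ^+ 2 <= 2 * F -> enorm w <= Num.sqrt (2 * F).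
Proof.
move=> h; have h0 : 0 <= 2 * F by apply: le_trans h; exact: sqr_ge0.
by rewrite /enorm ler_sqrt // -enorm_sq.
Qed.

Lemma vbound {R : rcfType} d (w x : 'I_d -> R) b S Mx :
  enorm w <= S -> `|b| <= enorm w * Mx + 1 -> 0 <= Mx -> enorm x <= Mx ->
  `|dot w x + b| <= 2 * S * Mx + 1.
Proof.
move=> hS hb hM hx.
have h1 := dot_bound w hx.
have h2 : enorm w * Mx <= S * Mx by apply: ler_wpM2r.
apply: le_trans (ler_normD _ _) _.
have -> : 2 * S * Mx = S * Mx + S * Mx by ring.
lra.
Qed.

Lemma card_split {R : rcfType} m (Sp Sn : {set 'I_m}) (z : 'I_m -> bool) :
  (forall j, j \in Sp -> z j) -> (forall j, j \in Sn -> j \notin Sp -> ~~ z j) ->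
  \sum_(j < m) b2R R (z j) =
  #|Sp|%:R + \sum_(j < m | j \notin Sp :|: Sn) b2R R (z j).
Proof.
move=> hp hn.
rewrite (bigID (fun j => j \in Sp :|: Sn)) /=; congr (_ + _).
rewrite (bigID (fun j => j \in Sp)) /=.
rewrite [X in _ + X]big1 ?addr0; last first.
  move=> j /andP [hj hj']; move: hj; rewrite in_setU (negbTE hj') /= => hj.
  by rewrite (negbTE (hn j hj hj')).
rewrite (eq_bigr (fun _ => 1)); last by move=> j /andP [_ hj]; rewrite hp.
rewrite (eq_bigl (fun j => j \in Sp)); last first.
  by move=> j /=; rewrite in_setU; case: (boolP (j \in Sp)) => h; rewrite ?andbT ?andbF.
by rewrite sumr_const.
Qed.


Lemma P3_of {R : rcfType} d n m (xl : 'I_n -> 'I_d -> R) (yl : 'I_n -> R)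
  (xu : 'I_m -> 'I_d -> R) tau M0 w b xi e1 e2 (z : 'I_m -> bool) :
  (forall i, 1 - xi i <= yl i * (dot w (xl i) + b)) ->
  (forall i, 0 <= xi i) -> 0 <= e1 -> 0 <= e2 ->
  tau%:R - e1 <= \sum_(j < m) b2R R (z j) ->
  \sum_(j < m) b2R R (z j) <= tau%:R + e2 ->
  (forall j, (z j -> 0 <= dot w (xu j) + b) /\ (~~ z j -> dot w (xu j) + b <= 0)
             /\ `|dot w (xu j) + b| <= M0) ->
  P3_feasible xl yl xu tau M0 w b xi e1 e2 z.
Proof.
move=> hl hx he1 he2 hc1 hc2 hj; split => //.
by move=> j; have [h1 [h2 h3]] := hj j; apply: cons_of.
Qed.

Lemma dot0 {R : rcfType} d (x : 'I_d -> R) : dot (fun _ => 0) x = 0.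
Proof. by rewrite /dot big1 // => k _; rewrite mul0r. Qed.

Theorem lemma5p1 (R : rcfType) (d n m : nat)
  (xl : 'I_n -> 'I_d -> R) (yl : 'I_n -> R) (xu : 'I_m -> 'I_d -> R)
  (C1 C2 : R) (tau : nat)
  (hC1 : 0 < C1) (hC2 : 0 < C2)
  (hy : forall i, yl i = 1 \/ yl i = -1)
  (hpos : exists i, yl i = 1) (hneg : exists i, yl i = -1)
  (htau : (tau <= m)%N)
  (wb : 'I_d -> R) (bb : R) (xib : 'I_n -> R) (etab1 etab2 : R) (zb : 'I_m -> bool)
  (hfeas : P3_feasible xl yl xu tau (bigM0 C1 C2 xl yl xu tau)
             wb bb xib etab1 etab2 zb)
  (ws : 'I_d -> R) (bs : R) (xis : 'I_n -> R) (etas1 etas2 : R) (zs : 'I_m -> bool)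
  (hopt : P3_optimal C1 C2 xl yl xu tau (bigM0 C1 C2 xl yl xu tau)
             ws bs xis etas1 etas2 zs)
  (Sp Sn : {set 'I_m}) (s : 'I_m)
  (hSp : forall j, j \in Sp -> 0 < dot ws (xu j) + bs)
  (hSn : forall j, j \in Sn -> dot ws (xu j) + bs < 0)
  (hs : s \notin Sp :|: Sn)
  (hsneg : dot wb (xu s) + bb < 0) :
  let fbar := objF C1 C2 wb xib etab1 etab2 in
  let fstar := objF C1 C2 ws xis etas1 etas2 in
  let M := 2 * Num.sqrt (2 * fbar) * maxnorm xl xu + 1 in
  (forall w b xi eta1 eta2 z,
     P5_feasible xl yl xu tau Sp Sn s M w b xi eta1 eta2 z ->
     fstar <= objF C1 C2 w xi eta1 eta2)
  /\
  (forall w b xi eta1 eta2 z,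
     P5_optimal C1 C2 xl yl xu tau Sp Sn s M w b xi eta1 eta2 z ->
     fbar < objF C1 C2 w xi eta1 eta2 ->
     dot ws (xu s) + bs < 0).
Proof.
move=> fbar fstar M.
case: hopt => hfs hmin.
set Mx := maxnorm xl xu in M *.
have hMx : 0 <= Mx := maxnorm_ge0 xl xu.
have hxl : forall i, enorm (xl i) <= Mx := fun i => maxnorm_l xl xu i.
have hxu : forall j, enorm (xu j) <= Mx := fun j => maxnorm_u xl xu j.
set nbar := #|[set i : 'I_n | yl i == -1]|.
set B := 2 * C1 * nbar%:R + C2 * (m - tau)%:R.
have hM0 : bigM0 C1 C2 xl yl xu tau = 2 * Num.sqrt (2 * B) * Mx + 1 by [].
rewrite hM0 in hfeas hfs hmin.
set M0 := 2 * Num.sqrt (2 * B) * Mx + 1 in hfeas hfs hmin.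
have hM01 : 1 <= M0.
  have : 0 <= 2 * Num.sqrt (2 * B) * Mx by rewrite mulr_ge0 // mulr_ge0 // sqrtr_ge0.
  rewrite /M0; lra.
have hfB : fstar <= B.
  pose xi0 := fun i => 1 - yl i.
  have hfe : P3_feasible xl yl xu tau M0 (fun _ => 0) 1 xi0 0 (m - tau)%:R (fun _ => true).
    apply: P3_of.
    - by move=> i; rewrite dot0 /xi0 add0r mulr1; lra.
    - by move=> i; rewrite /xi0; case: (hy i) => ->; lra.
    - by [].
    - by rewrite ler0n.
    - by rewrite b2R1 sumr_const card_ord subr0 ler_nat.
    - by rewrite b2R1 sumr_const card_ord -natrD subnKC.
    - move=> j; rewrite dot0 add0r; split => //; split => //.
      by rewrite ger0_norm.
  have := hmin _ _ _ _ _ _ hfe; rewrite /fstar => /le_trans; apply.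
  rewrite /objF /enorm /dot big1 ?sqrtr0; last by move=> k _; rewrite mul0r.
  have -> : \sum_(i < n) xi0 i = 2 * nbar%:R.
    rewrite (eq_bigr (fun i => if yl i == -1 then 2 else 0)); last first.
      by move=> i _; rewrite /xi0; case: (hy i) => ->; rewrite ?neq1m1 ?eqxx; lra.
    rewrite -big_mkcond /= (eq_bigl (fun i => i \in [set i | yl i == -1])); last first.
      by move=> i; rewrite inE.
    by rewrite sumr_const [RHS]mulr_natr.
  rewrite /B; lra.
have hsf : fstar <= fbar by apply: hmin; exact: hfeas.
case: hfs => hl1 hu1 [hc1 hc2] hxi1 [he1 he2].
have hws2 : enorm ws ^+ 2 <= 2 * fstar by apply: objF_norm.
have hwsB : enorm ws <= Num.sqrt (2 * B) by apply: enorm_le; lra.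
have hwsf : enorm ws <= Num.sqrt (2 * fbar) by apply: enorm_le; lra.
have hsgn : forall j, (zs j -> 0 <= dot ws (xu j) + bs) /\ (~~ zs j -> dot ws (xu j) + bs <= 0).
  by move=> j; have [h1 h2] := hu1 j; exact: sign_of h1 h2.
have hbs : `|bs| <= enorm ws * Mx + 1.
  have [b' [xi' [hl' hx' hb' hsg' [[<- _]|hlt]]]] :=
    clamp hy hpos hneg hxl hxu hl1 hxi1 => //.
  exfalso.
  have hfe : P3_feasible xl yl xu tau M0 ws b' xi' etas1 etas2 zs.
    apply: P3_of => // j; have [s1 s2] := hsgn j; have [t1 t2] := hsg' j.
    split; [by move=> /s1 /t1|split; first by move=> /s2 /t2].
    exact: vbound.
  have := hmin _ _ _ _ _ _ hfe; rewrite /fstar /objF.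
  have : C1 * \sum_i xi' i < C1 * \sum_i xis i by rewrite ltr_pM2l.
  lra.
split.
- move=> w b xi e1 e2 z [hl hout [hSp' [hSn' [hs0 hs1]]] [hk1 hk2] [hxi he1' he2']].
  rewrite leNgt; apply/negP => hlt.
  have hw2 : enorm w ^+ 2 <= 2 * objF C1 C2 w xi e1 e2 by apply: objF_norm.
  have hwB : enorm w <= Num.sqrt (2 * B) by apply: enorm_le; lra.
  have [b' [xi' [hl' hx' hb' hsg' hor]]] := clamp hy hpos hneg hxl hxu hl hxi.
  have hsum : \sum_i xi' i <= \sum_i xi i.
    by case: hor => [[_ ->]|/ltW].
  pose z' := fun j => if j \in Sp then true else if j \in Sn then false else z j.
  have hcs : \sum_(j < m) b2R R (z' j) =
      #|Sp|%:R + \sum_(j < m | j \notin Sp :|: Sn) b2R R (z j).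
    rewrite (card_split (Sp := Sp) (Sn := Sn)); last first.
    + by move=> j hj hj'; rewrite /z' (negbTE hj') hj.
    + by move=> j hj; rewrite /z' hj.
    congr (_ + _); apply: eq_bigr => j.
    by rewrite in_setU negb_or => /andP [h1 h2]; rewrite /z' (negbTE h1) (negbTE h2).
  have hfe : P3_feasible xl yl xu tau M0 w b' xi' e1 e2 z'.
    apply: P3_of => //; try by rewrite hcs.
    move=> j; have [t1 t2] := hsg' j.
    have hsg : (z' j -> 0 <= dot w (xu j) + b) /\ (~~ z' j -> dot w (xu j) + b <= 0).
      rewrite /z'; case: (boolP (j \in Sp)) => hp.
        by split => // _; apply: hSp'.
      case: (boolP (j \in Sn)) => hn.
        by split => // _; apply: hSn'.
      have [->|hjs] := eqVneq j s.
        case: (z s) hs1; rewrite ?b2R1 ?b2R0 /= => h; split => // _; lra.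
      have hj : j \notin s |: (Sp :|: Sn) by rewrite !in_setU1 in_setU negb_or hjs /= negb_or hp hn.
      have [h1 h2] := hout j hj; exact: sign_of h1 h2.
    have [s1 s2] := hsg.
    split; [by move=> /s1 /t1|split; first by move=> /s2 /t2].
    exact: vbound.
  have := hmin _ _ _ _ _ _ hfe; rewrite /fstar /objF.
  have : C1 * \sum_i xi' i <= C1 * \sum_i xi i by rewrite ler_pM2l.
  move: hlt; rewrite /fstar /objF; lra.
- move=> w b xi e1 e2 z [hf5 hmin5] hlt.
  rewrite ltNge; apply/negP => hge.
  have hvb : forall j, `|dot ws (xu j) + bs| <= M by move=> j; exact: vbound.
  have hf : P5_feasible xl yl xu tau Sp Sn s M ws bs xis etas1 etas2 zs.
    split => //.
    - by move=> j _; have [h1 h2] := hsgn j; apply: cons_of.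
    - split; first by move=> j /hSp /ltW.
      split; first by move=> j /hSn /ltW.
      split => //.
      by have [h1 h2] := hsgn s; have [] := cons_of h1 h2 (hvb s).
    - rewrite -card_split; first by split.
      + move=> j hj; have [_ h2] := hsgn j; apply/negPn/negP => /h2.
        by rewrite leNgt hSp.
      + move=> j hj _; have [h1 _] := hsgn j; apply/negP => /h1.
        by rewrite leNgt hSn.
  have := hmin5 _ _ _ _ _ _ hf.
  move: hlt hsf; rewrite /fbar /fstar; lra.
Qed.
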